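(* For all integers $m$ and $n$, \[ F_m \sum_{k = 1}^n ( - 1)^{mk - 1} L_{2mk} = ( - 1)^{mn - 1} F_{mn} L_{mn + m}\,. \]
   Context: $F_i$ and $L_i$ denote the Fibonacci and Lucas numbers, defined for all $i\in\mathbb{Z}$ by $F_i=F_{i-1}+F_{i-2}$, $F_0=0$, $F_1=1$, and $L_i=L_{i-1}+L_{i-2}$, $L_0=2$, $L_1=1$; equivalently $F_{-i}=(-1)^{i-1}F_i$ and $L_{-i}=(-1)^iL_i$. Summation convention for an arbitrary integer upper limit: $\sum_{k=a}^{a-1} f(k)=0$, and for $n<a-1$, $\sum_{k=a}^{n} f(k) = -\sum_{k=n+1}^{a-1} f(k)$. *)

(* Defs.v *)
From Stdlib Require Import ZArith List Lia.
Open Scope Z_scope.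

Fixpoint fibl_nat (n : nat) : Z * Z :=  (* (F_n, F_{n+1}) *)
  match n with
  | O => (0, 1)
  | S k => let (a, b) := fibl_nat k in (b, a + b)
  end.
Definition Fn (n : nat) : Z := fst (fibl_nat n).
Definition Ln (n : nat) : Z := 2 * Fn (S n) - Fn n.  (* L_n = F_{n+1} + F_{n-1} = 2F_{n+1} - F_n *)

Definition sgnpow (j : Z) : Z := if Z.even j then 1 else -1.

(* Extension to all integers: F_{-i} = (-1)^(i-1) F_i, L_{-i} = (-1)^i L_i. *)
Definition F (i : Z) : Z :=
  if 0 <=? i then Fn (Z.to_nat i) else sgnpow (- i - 1) * Fn (Z.to_nat (- i)).
Definition L (i : Z) : Z :=
  if 0 <=? i then Ln (Z.to_nat i) else sgnpow (- i) * Ln (Z.to_nat (- i)).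

Fixpoint sum_from (f : Z -> Z) (a : Z) (len : nat) : Z :=
  match len with
  | O => 0
  | S k => f a + sum_from f (a + 1) k
  end.

(* sum_{k=a}^{n} f k with the convention: empty (=0) if n = a-1, and
   - sum_{k=n+1}^{a-1} f k if n < a - 1. *)
Definition sumZ (a n : Z) (f : Z -> Z) : Z :=
  if a - 1 <=? n then sum_from f a (Z.to_nat (n - a + 1))
  else - sum_from f (n + 1) (Z.to_nat (a - 1 - n)).

(* Main.v *)
Require Import Defs.
From Stdlib Require Import ZArith.
From Stdlib Require Import Lia.
Open Scope Z_scope.

Lemma sg_add x y : sgnpow (x + y) = sgnpow x * sgnpow y.
Proof. unfold sgnpow; rewrite Z.even_add; destruct (Z.even x), (Z.even y); reflexivity. Qed.
Lemma sg_sq x : sgnpow x * sgnpow x = 1.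
Proof. unfold sgnpow; destruct (Z.even x); reflexivity. Qed.

Lemma zind (P : Z -> Prop) : P 0 -> (forall x, P x -> P (x+1)) ->
  (forall x, P (x+1) -> P x) -> forall z, P z.
Proof.
  intros H0 H1 H2 z. destruct (Z_le_gt_dec 0 z) as [l|l].
  - rewrite <- (Z2Nat.id z l). induction (Z.to_nat z) as [|k IH]; [exact H0|].
    rewrite Nat2Z.inj_succ. apply H1; auto.
  - replace z with (- Z.of_nat (Z.to_nat (-z))) by lia.
    induction (Z.to_nat (-z)) as [|k IH]; [exact H0|].
    apply H2. replace (- Z.of_nat (S k) + 1) with (- Z.of_nat k) by lia. exact IH.
Qed.

Lemma fibl_S k : fibl_nat (S k) = (snd (fibl_nat k), fst (fibl_nat k) + snd (fibl_nat k)).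
Proof. simpl. destruct (fibl_nat k); reflexivity. Qed.
Lemma Fn_SS k : Fn (S (S k)) = Fn (S k) + Fn k.
Proof. unfold Fn. rewrite !fibl_S. simpl. lia. Qed.

Lemma Fpos k : F (Z.of_nat k) = Fn k.
Proof. unfold F. replace (0 <=? Z.of_nat k) with true by (symmetry; apply Z.leb_le; lia).
  now rewrite Nat2Z.id. Qed.
Lemma Fneg k : F (- Z.of_nat k) = sgnpow (Z.of_nat k - 1) * Fn k.
Proof. destruct k as [|k]. reflexivity.
  unfold F. replace (0 <=? - Z.of_nat (S k)) with false by (symmetry; apply Z.leb_gt; lia).
  replace (- - Z.of_nat (S k)) with (Z.of_nat (S k)) by lia. rewrite Nat2Z.id.
  try (f_equal; f_equal; lia). Qed.

Lemma Frec i : F (i + 2) = F (i + 1) + F i.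
Proof.
  destruct (Z_le_gt_dec 0 i) as [l|l].
  - rewrite <- (Z2Nat.id i l). set (k := Z.to_nat i).
    replace (Z.of_nat k + 2) with (Z.of_nat (S (S k))) by lia.
    replace (Z.of_nat k + 1) with (Z.of_nat (S k)) by lia.
    rewrite !Fpos. apply Fn_SS.
  - destruct (Z.eq_dec i (-1)) as [->|ne]. reflexivity.
    replace i with (- Z.of_nat (S (S (Z.to_nat (-i - 2))))) by lia.
    set (k := Z.to_nat (-i-2)).
    replace (- Z.of_nat (S (S k)) + 2) with (- Z.of_nat k) by lia.
    replace (- Z.of_nat (S (S k)) + 1) with (- Z.of_nat (S k)) by lia.
    rewrite !Fneg, Fn_SS.
    replace (Z.of_nat (S (S k)) - 1) with ((Z.of_nat k - 1) + 2) by lia.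
    replace (Z.of_nat (S k) - 1) with ((Z.of_nat k - 1) + 1) by lia.
    rewrite !sg_add. change (sgnpow 2) with 1. change (sgnpow 1) with (-1). ring.
Qed.

Lemma Ldef i : L i = 2 * F (i + 1) - F i.
Proof.
  destruct (Z_le_gt_dec 0 i) as [l|l].
  - unfold L. replace (0 <=? i) with true by (symmetry; apply Z.leb_le; lia).
    rewrite <- (Z2Nat.id i l). set (k := Z.to_nat i).
    replace (Z.of_nat k + 1) with (Z.of_nat (S k)) by lia.
    rewrite !Fpos, Nat2Z.id. reflexivity.
  - replace i with (- Z.of_nat (S (Z.to_nat (-i - 1)))) by lia.
    set (k := Z.to_nat (-i-1)).
    replace (- Z.of_nat (S k) + 1) with (- Z.of_nat k) by lia.
    rewrite !Fneg. unfold L.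
    replace (0 <=? - Z.of_nat (S k)) with false by (symmetry; apply Z.leb_gt; lia).
    replace (- - Z.of_nat (S k)) with (Z.of_nat (S k)) by lia. rewrite Nat2Z.id.
    unfold Ln. rewrite Fn_SS.
    replace (Z.of_nat (S k)) with (Z.of_nat k + 1) by lia.
    replace (Z.of_nat k + 1 - 1) with (Z.of_nat k) by lia.
    replace (Z.of_nat k - 1) with (Z.of_nat k + -1) by lia.
    rewrite !sg_add. change (sgnpow 1) with (-1). change (sgnpow (-1)) with (-1). ring.
Qed.

Lemma FA a b : F (a + b) = F a * F (b + 1) + (F (a + 1) - F a) * F b.
Proof.
  enough (H : forall b, (F (a + b) = F a * F (b + 1) + (F (a + 1) - F a) * F b) /\
      (F (a + (b+1)) = F a * F (b + 1 + 1) + (F (a + 1) - F a) * F (b+1))) by apply H.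
  apply zind.
  - change (F (0+1)) with 1. change (F 0) with 0. change (F (0+1+1)) with 1.
    rewrite Z.add_0_r. split; [ring | rewrite Z.add_0_l; ring].
  - intros x [H1 H2]. split; [exact H2|].
    pose proof (Frec (a + x)) as E1. pose proof (Frec (x+1)) as E2.
    replace (a + x + 2) with (a + (x+1+1)) in E1 by lia.
    replace (a + x + 1) with (a + (x+1)) in E1 by lia.
    replace (x+1+2) with (x+1+1+1) in E2 by lia.
    rewrite E1, E2, H1, H2. pose proof (Frec x) as E5. replace (x+2) with (x+1+1) in E5 by lia. rewrite E5. ring.
  - intros x [H1 H2]. split; [|exact H1].
    pose proof (Frec (a + x)) as E1. pose proof (Frec x) as E2.
    replace (a + x + 2) with (a + (x+1+1)) in E1 by lia.
    replace (a + x + 1) with (a + (x+1)) in E1 by lia.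
    replace (x+2) with (x+1+1) in E2 by lia.
    assert (F (a + x) = F (a + (x + 1 + 1)) - F (a + (x+1))) as E3 by lia.
    assert (F x = F (x+1+1) - F (x+1)) as E4 by lia.
    pose proof (Frec (x+1)) as E6. replace (x+1+2) with (x+1+1+1) in E6 by lia. rewrite E3, H1, H2, E6, E2. ring.
Qed.

Lemma FA' a b c : c = a + b -> F c = F a * F (b + 1) + (F (a + 1) - F a) * F b.
Proof. intros ->; apply FA. Qed.

Lemma Cass m : sgnpow m = F (m+1) * F (m+1) - F (m+1) * F m - F m * F m.
Proof.
  apply (zind (fun m => sgnpow m = F (m+1) * F (m+1) - F (m+1) * F m - F m * F m)).
  - reflexivity.
  - intros x H. rewrite sg_add. change (sgnpow 1) with (-1).
    replace (x+1+1) with (x+2) by lia. rewrite Frec, H. ring.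
  - intros x H. rewrite sg_add in H. change (sgnpow 1) with (-1) in H.
    replace (x+1+1) with (x+2) in H by lia. rewrite Frec in H. lia.
Qed.

Lemma key a m : F m * L (2*a + 2*m) = F (a+m) * L (a + 2*m) - sgnpow m * F a * L (a+m).
Proof.
  rewrite !Ldef, Cass.
  set (x := F a). set (x1 := F (a+1)). set (y := F m). set (y1 := F (m+1)).
  assert (Hm2 : F (m+2) = y1 + y) by apply Frec.
  assert (H2m : F (2*m) = y * y1 + (y1 - y) * y) by (apply FA'; lia).
  assert (H2m1 : F (2*m+1) = y * F (m+2) + (y1 - y) * y1)
    by (rewrite (FA' m (m+1)) by lia; f_equal; f_equal; f_equal; lia).
  assert (H2m2 : F (2*m+2) = F (2*m+1) + F (2*m)) by apply Frec.
  assert (Ham : F (a+m) = x * y1 + (x1 - x) * y) by (apply FA'; lia).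
  assert (Ham1 : F (a+m+1) = x * F (m+2) + (x1 - x) * y1)
    by (rewrite (FA' a (m+1)) by lia; f_equal; f_equal; f_equal; lia).
  assert (Ha2m : F (a+2*m) = x * F (2*m+1) + (x1 - x) * F (2*m)) by (apply FA'; lia).
  assert (Ha2m1 : F (a+2*m+1) = x * F (2*m+2) + (x1 - x) * F (2*m+1))
    by (rewrite (FA' a (2*m+1)) by lia; f_equal; f_equal; f_equal; lia).
  assert (Hu2 : F (a+m+2) = F (a+m+1) + F (a+m)) by apply Frec.
  assert (H2u : F (2*a+2*m) = F (a+m) * F (a+m+1) + (F (a+m+1) - F (a+m)) * F (a+m))
    by (apply FA'; lia).
  assert (H2u1 : F (2*a+2*m+1) = F (a+m) * F (a+m+2) + (F (a+m+1) - F (a+m)) * F (a+m+1))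
    by (rewrite (FA' (a+m) (a+m+1)) by lia; f_equal; f_equal; f_equal; lia).
  replace (a + 2*m + 1) with (a+2*m+1) by lia.
  rewrite H2u1, H2u, Hu2, Ha2m1, Ha2m, H2m2, H2m1, H2m, Hm2, Ham1, Ham.
  rewrite !Hm2.  ring.
Qed.

Lemma sum_from_last f a k : sum_from f a (S k) = sum_from f a k + f (a + Z.of_nat k).
Proof.
  revert a; induction k as [|k IH]; intros a.
  - simpl. rewrite !Z.add_0_r. reflexivity.
  - change (sum_from f a (S (S k))) with (f a + sum_from f (a+1) (S k)).
    rewrite IH. simpl. replace (a + 1 + Z.of_nat k) with (a + Z.pos (Pos.of_succ_nat k)) by lia.
    ring.
Qed.

Lemma sumZ_step a n f : sumZ a (n+1) f = sumZ a n f + f (n+1).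
Proof.
  unfold sumZ.
  destruct (Z.leb_spec (a-1) n) as [h|h].
  - replace (a - 1 <=? n+1) with true by (symmetry; apply Z.leb_le; lia).
    replace (Z.to_nat (n + 1 - a + 1)) with (S (Z.to_nat (n - a + 1))) by lia.
    rewrite sum_from_last. f_equal. f_equal. lia.
  - destruct (Z.eq_dec (n+1) (a-1)) as [e|e].
    + replace (a - 1 <=? n+1) with true by (symmetry; apply Z.leb_le; lia).
      replace (Z.to_nat (n + 1 - a + 1)) with O by lia.
      replace (Z.to_nat (a - 1 - n)) with 1%nat by lia. simpl. ring.
    + replace (a - 1 <=? n+1) with false by (symmetry; apply Z.leb_gt; lia).
      replace (Z.to_nat (a - 1 - n)) with (S (Z.to_nat (a - 1 - (n+1)))) by lia.
      simpl. replace (n+1+1) with (n+1+1) by lia. ring.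
Qed.

Theorem lemma3 (m n : Z) :
  F m * sumZ 1 n (fun k => sgnpow (m * k - 1) * L (2 * m * k))
  = sgnpow (m * n - 1) * F (m * n) * L (m * n + m).
Proof.
  set (f := fun k => sgnpow (m * k - 1) * L (2 * m * k)).
  assert (core : forall n, F m * f (n+1) =
     sgnpow (m * (n+1) - 1) * F (m * (n+1)) * L (m * (n+1) + m)
     - sgnpow (m * n - 1) * F (m * n) * L (m * n + m)).
  { intros k. unfold f. set (a := m * k).
    replace (m * (k+1) - 1) with ((a - 1) + m) by (unfold a; lia).
    replace (m * (k+1)) with (a + m) by (unfold a; lia).
    replace (2 * m * (k+1)) with (2*a + 2*m) by (unfold a; lia).
    replace (a + m + m) with (a + 2*m) by lia.
    rewrite sg_add.
    pose proof (key a m) as K. pose proof (sg_sq m) as Q.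
    replace (F m * (sgnpow (a - 1) * sgnpow m * L (2 * a + 2 * m)))
      with (sgnpow (a - 1) * sgnpow m * (F m * L (2 * a + 2 * m))) by ring.
    rewrite K.
    replace (sgnpow (a - 1) * F a * L (a + m))
      with (sgnpow (a - 1) * (sgnpow m * sgnpow m) * F a * L (a + m)) by (rewrite Q; ring).
    ring. }
  revert n.
  apply (zind (fun n => F m * sumZ 1 n f = sgnpow (m * n - 1) * F (m * n) * L (m * n + m))).
  - change (sumZ 1 0 f) with 0. rewrite !Z.mul_0_r. reflexivity.
  - intros x H. rewrite sumZ_step, Z.mul_add_distr_l, H, core. ring.
  - intros x H. rewrite sumZ_step, Z.mul_add_distr_l, core in H. lia.
Qed.
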